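(* Let $p,q$ be coprime positive integers. Then $E(p,q)=d_c(e^{2\pi i/3},p/q)$.
   Context: Hyperbolic plane is modelled on the upper half-plane $\{\operatorname{Im}z>0\}$ with absolute $\mathbb R\cup\{\infty\}$. The Farey tesselation consists of the hyperbolic geodesics joining $m/n$ and $p'/q'$ (integers, $\infty=1/0$) with $|mq'-np'|=1$; it tesselates the plane into ideal triangles. For a point $z$ not on any Farey line and a rational (or $\infty$) absolute point $r$, $d_c(z,r)$ is the number of Farey lines that intersect the geodesic ray from $z$ to $r$. For coprime positive integers $p,q$, the Euclid complexity $E(p,q)$ is the number of subtractions in the subtractive Euclid algorithm converting the pair $(p,q)$ into $(0,1)$, i.e. the sum of the partial quotients of the continued fraction of $p/q$. *)

(* Defs.v *)
From mathcomp Require Import all_boot all_order all_algebra.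
From mathcomp Require Import reals.
Set Implicit Arguments. Unset Strict Implicit. Unset Printing Implicit Defensive.
Import Order.TTheory GRing.Theory Num.Theory.

(* Subtractive Euclid algorithm on (p,q): at each step subtract the smaller
   entry from the larger one (the first from the second on ties), until an
   entry is 0.  [sub_euclid] counts the subtractions; fuel p+q suffices since
   each step decreases p+q. *)
Fixpoint sub_euclid (fuel p q : nat) : nat :=
  match fuel with
  | 0 => 0
  | f.+1 =>
    if (p == 0) || (q == 0) then 0
    else if p <= q then (sub_euclid f p (q - p)).+1
    else (sub_euclid f (p - q) q).+1
  end.

Definition Euclid_complexity (p q : nat) : nat := sub_euclid (p + q) p q.

Local Open Scope ring_scope.

(* Absolute points: [Some r] is the rational r, [None] is infinity = 1/0. *)
Definition apoint := option rat.

(* A Farey line is represented canonically by a pair (a, b) with a : rat and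
   b : apoint, where either b = None (the vertical line from a to infinity)
   or b = Some b' with a < b'.  Farey condition |m q' - n p'| = 1 with the
   endpoints in lowest terms (infinity = 1/0). *)
Definition is_farey (l : rat * apoint) : bool :=
  let a := l.1 in
  match l.2 with
  | None => denq a == 1
  | Some b => (a < b) && (`|numq a * denq b - denq a * numq b| == 1)
  end.

Section Geom.
Variable R : realType.

(* Points of the upper half-plane are pairs (x, y) with y > 0. *)
Definition on_farey (l : rat * apoint) (w : R * R) : Prop :=
  0 < w.2 /\
  match l.2 with
  | None => w.1 = ratr l.1
  | Some b => (w.1 - ratr l.1) * (w.1 - ratr b) + w.2 ^+ 2 = 0
  end.

(* The (closed at z) geodesic ray from z to the absolute point r. *)
Definition on_ray (z : R * R) (r : apoint) (w : R * R) : Prop :=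
  match r with
  | None => w.1 = z.1 /\ z.2 <= w.2
  | Some r' =>
    let rr : R := ratr r' in
    if z.1 == rr then w.1 = z.1 /\ 0 < w.2 /\ w.2 <= z.2
    else
      let c := (z.1 ^+ 2 + z.2 ^+ 2 - rr ^+ 2) / (2 * (z.1 - rr)) in
      [/\ 0 < w.2, (w.1 - c) ^+ 2 + w.2 ^+ 2 = (rr - c) ^+ 2
        & Num.min z.1 rr <= w.1 <= Num.max z.1 rr]
  end.

Definition dc_is (z : R * R) (r : apoint) (n : nat) : Prop :=
  exists s : seq (rat * apoint),
    [/\ uniq s,
        (forall l, l \in s <-> (is_farey l /\ exists w, on_ray z r w /\ on_farey l w))
      & size s = n].

Definition omega3 : R * R := (- (1 / 2), Num.sqrt 3 / 2).

End Geom.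

(* Main.v *)
Require Import Defs.
From mathcomp Require Import all_boot all_order all_algebra.
From mathcomp Require Import reals.
From mathcomp Require Import zify ring lra.
Set Implicit Arguments. Unset Strict Implicit. Unset Printing Implicit Defensive.
Import Order.TTheory GRing.Theory Num.Theory.
Local Open Scope ring_scope.

Definition quad := ((int * int) * (int * int))%type.
Definition e0 : quad := ((0,1),(1,0)).
Definition Pq (p q : int) (x : quad) : bool :=
  let: ((m,n),(m',n')) := x in
  [&& 1 <= n, 0 <= n', 0 <= m, m' * n - m * n' == 1, 0 < p * n - q * m & 0 < q * m' - p * n'].
Definition gmap (x:quad) : quad := let: ((m,n),(m',n')) := x in ((m, n+m),(m', n'+m')).
Definition ginv (x:quad) : quad := let: ((m,n),(m',n')) := x in ((m, n-m),(m', n'-m')).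
Definition hmap (x:quad) : quad := let: ((m,n),(m',n')) := x in ((m+n, n),(m'+n', n')).
Definition hinv (x:quad) : quad := let: ((m,n),(m',n')) := x in ((m-n, n),(m'-n', n')).

Lemma Pg (p q : int) x : 0 < p -> Pq p q x -> Pq p (q + p) (gmap x) && (gmap x != e0).
Proof.
case: x => [[m n] [m' n']] hp /and5P[h1 h2 h3 /eqP h4 /andP[h5 h6]].
have hm' : 1 <= m' by nia.
apply/andP; split; last by apply/negP => /eqP [] ? ? ? ?; lia.
by apply/and5P; split; try apply/eqP; try (apply/andP; split); lia.
Qed.

Lemma Pginv (p q : int) x : 0 < p -> p < q -> Pq p q x -> x != e0 -> Pq p (q - p) (ginv x).
Proof.
case: x => [[m n] [m' n']] hp hpq /and5P[h1 h2 h3 /eqP h4 /andP[h5 h6]] hne.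
have hmn : m < n by nia.
have hmn' : m' <= n'.
  case: (leP m' n') => // hlt.
  case: (ltP 0 n') => hn'.
    have : m' * n - m * n' >= n + n' by nia.
    lia.
  have hn0 : n' = 0 by lia.
  subst n'.
  have hmn1 : m' * n = 1 by lia.
  have hm1 : m' = 1 /\ n = 1.
    have : 0 < m' by nia.
    nia.
  case: hm1 => ? ?; subst.
  have : m = 0 by nia.
  move=> ?; subst. by rewrite eqxx in hne.
by apply/and5P; split; try apply/eqP; try (apply/andP; split); lia.
Qed.

Lemma Pginv_K x : gmap (ginv x) = x.
Proof. case: x => [[m n] [m' n']] /=. by rewrite !subrK. Qed.

Lemma Ph (p q : int) x : 0 < q -> Pq p q x -> Pq (p + q) q (hmap x) && (hmap x != e0).
Proof.
case: x => [[m n] [m' n']] hq /and5P[h1 h2 h3 /eqP h4 /andP[h5 h6]].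
apply/andP; split; last by apply/negP => /eqP [] ? ? ? ?; lia.
by apply/and5P; split; try apply/eqP; try (apply/andP; split); lia.
Qed.

Lemma Phinv (p q : int) x : 0 < q -> q < p -> Pq p q x -> x != e0 -> Pq (p - q) q (hinv x).
Proof.
case: x => [[m n] [m' n']] hq hpq /and5P[h1 h2 h3 /eqP h4 /andP[h5 h6]] hne.
have hmn : n <= m.
  case: (leP n m) => // hlt.
  case: (ltP 0 n') => hn'.
    have hm' : n' < m' by nia.
    have : m' * n - m * n' >= n + n' by nia.
    lia.
  have hn0 : n' = 0 by lia.
  subst n'.
  have hmn1 : m' * n = 1 by lia.
  have hm1 : m' = 1 /\ n = 1.
    have : 0 < m' by nia.
    nia.
  case: hm1 => ? ?; subst.
  have : m = 0 by nia.
  move=> ?; subst. by rewrite eqxx in hne.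
by apply/and5P; split; try apply/eqP; try (apply/andP; split); lia.
Qed.

Lemma Pginv_K' x : ginv (gmap x) = x.
Proof. case: x => [[m n] [m' n']] /=. by rewrite !addrK. Qed.

Lemma Phinv_K' x : hinv (hmap x) = x.
Proof. case: x => [[m n] [m' n']] /=. by rewrite !addrK. Qed.

Lemma Phinv_K x : hmap (hinv x) = x.
Proof. case: x => [[m n] [m' n']] /=. by rewrite !subrK. Qed.

Lemma P11 x : Pq 1 1 x = (x == e0).
Proof.
case: x => [[m n] [m' n']]; apply/idP/idP.
  move=> /and5P[h1 h2 h3 /eqP h4 /andP[h5 h6]].
  have hn' : n' = 0.
    case: (ltP 0 n') => hn'; last lia.
    have : m' * n - m * n' >= n + n' by nia.
    lia.
  subst n'.
  have hmn1 : m' * n = 1 by lia.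
  have hm1 : m' = 1 /\ n = 1.
    have : 0 < m' by nia.
    nia.
  case: hm1 => ? ?; subst.
  have : m = 0 by nia.
  by move=> ->.
by move/eqP => [-> -> -> ->].
Qed.

Fixpoint Lq (f p q : nat) : seq quad :=
  match f with
  | 0 => [::]
  | f.+1 =>
    if (p == 0)%N || (q == 0)%N then [::]
    else if (p <= q)%N then e0 :: map gmap (Lq f p (q - p))
    else e0 :: map hmap (Lq f (p - q) q)
  end.


Lemma size_Lq f p q : size (Lq f p q) = sub_euclid f p q.
Proof.
elim: f p q => [//|f IH] p q /=.
by case: ifP => // _; case: ifP => _ /=; rewrite size_map IH.
Qed.

Lemma Pe0 (p q : nat) : (0 < p)%N -> (0 < q)%N -> Pq p q e0.
Proof. move=> hp hq; rewrite /Pq /e0; apply/and5P; split; try apply/eqP; try (apply/andP; split); lia. Qed.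

Lemma mem_Lq f (p q : nat) : (0 < p)%N -> (0 < q)%N -> coprime p q -> (p + q <= f)%N ->
  forall x, (x \in Lq f p q) = Pq p q x.
Proof.
elim: f p q => [|f IH] p q hp hq hco hf x; first lia.
rewrite /=.
have -> : ((p == 0)%N || (q == 0)%N) = false by lia.
case: ifP => hpq.
  case: (ltnP p q) => hlt.
    have hco' : coprime p (q - p).
      by move: hco; rewrite /coprime -{1}(subnKC hpq) gcdnDl.
    have IH' := IH p (q - p)%N hp (ltac:(lia)) hco' (ltac:(lia)).
    rewrite in_cons; apply/idP/idP.
      case/orP => [/eqP -> | /mapP [y hy ->]]; first exact: Pe0.
      rewrite IH' in hy.
      have := Pg (p:=p) (q:=(q - p)%N) (ltac:(lia)) hy.
      have -> : ((q - p)%N : int) + p = q by lia.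
      by case/andP.
    move=> hx; case: (eqVneq x e0) => //= hne.
    apply/mapP; exists (ginv x); last by rewrite Pginv_K.
    rewrite IH'.
    have -> : ((q - p)%N : int) = q%:Z - p%:Z by lia.
    apply: Pginv => //; lia.
  have epq : p = q by lia.
  subst q.
  have ep1 : p = 1%N by move: hco; rewrite /coprime gcdnn => /eqP.
  subst p.
  rewrite subnn P11 in_cons.
  by case: f {IH hf} => [|f] /=; rewrite orbF.
have hco' : coprime (p - q) q.
  rewrite coprime_sym; move: hco; rewrite coprime_sym.
  have hqp : (q <= p)%N by lia.
  by rewrite /coprime -{1}(subnKC hqp) gcdnDl.
have IH' := IH (p - q)%N q (ltac:(lia)) hq hco' (ltac:(lia)).
rewrite in_cons; apply/idP/idP.
  case/orP => [/eqP -> | /mapP [y hy ->]]; first exact: Pe0.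
  rewrite IH' in hy.
  have := Ph (p:=(p - q)%N) (q:=q) (ltac:(lia)) hy.
  have -> : ((p - q)%N : int) + q = p by lia.
  by case/andP.
move=> hx; case: (eqVneq x e0) => //= hne.
apply/mapP; exists (hinv x); last by rewrite Phinv_K.
rewrite IH'.
have -> : ((p - q)%N : int) = p%:Z - q%:Z by lia.
apply: Phinv => //; lia.
Qed.

Lemma uniq_Lq f (p q : nat) : (0 < p)%N -> (0 < q)%N -> coprime p q -> (p + q <= f)%N ->
  uniq (Lq f p q).
Proof.
elim: f p q => [|f IH] p q hp hq hco hf; first lia.
rewrite /=.
have -> : ((p == 0)%N || (q == 0)%N) = false by lia.
case: ifP => hpq.
  case: (ltnP p q) => hlt.
    have hco' : coprime p (q - p).
      by move: hco; rewrite /coprime -{1}(subnKC hpq) gcdnDl.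
    rewrite /= (map_inj_uniq (f:=gmap)); last first.
      by move=> x y exy; rewrite -[x]Pginv_K' -[y]Pginv_K' exy.
    rewrite IH //; try lia.
    rewrite andbT; apply/mapP => [[y hy]].
    rewrite mem_Lq // in hy; try lia.
    have := Pg (p:=p) (q:=(q - p)%N) (ltac:(lia)) hy.
    by case/andP => _ /eqP hne /esym.
  have epq : p = q by lia.
  subst q.
  have ep1 : p = 1%N by move: hco; rewrite /coprime gcdnn => /eqP.
  subst p.
  by rewrite subnn; case: f {IH hf} => [|f].
have hco' : coprime (p - q) q.
  rewrite coprime_sym; move: hco; rewrite coprime_sym.
  have hqp : (q <= p)%N by lia.
  by rewrite /coprime -{1}(subnKC hqp) gcdnDl.
rewrite /= (map_inj_uniq (f:=hmap)); last first.
  by move=> x y exy; rewrite -[x]Phinv_K' -[y]Phinv_K' exy.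
rewrite IH //; try lia.
rewrite andbT; apply/mapP => [[y hy]].
rewrite mem_Lq // in hy; try lia.
have := Ph (p:=(p - q)%N) (q:=q) (ltac:(lia)) hy.
by case/andP => _ /eqP hne /esym.
Qed.

Definition conv (x : quad) : rat * apoint :=
  let: ((m,n),(m',n')) := x in
  ((m%:~R / n%:~R : rat), if n' == 0 then None else Some (m'%:~R / n'%:~R)).

Definition sep (r : rat) (l : rat * apoint) : bool :=
  match l.2 with
  | None => (0 <= l.1) && (l.1 < r)
  | Some b => (l.1 < r) && (r < b)
  end.

Lemma fracLt (m n m' n' : int) : 0 < n -> 0 < n' ->
  ((m%:~R / n%:~R : rat) < m'%:~R / n'%:~R) = (m * n' < m' * n).
Proof.
move=> hn hn'.
rewrite ltr_pdivrMr ?ltr0z // mulrAC ltr_pdivlMr ?ltr0z //.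
by rewrite -!intrM ltr_int.
Qed.

Lemma det_coprime (m n m' n' : int) : m' * n - m * n' = 1 -> coprime `|m| `|n|.
Proof.
move=> h; rewrite -coprimezE /coprimez.
have : (gcdz m n %| m' * n - m * n')%Z.
  apply: rpredB; [apply: dvdz_mull; exact: dvdz_gcdr | apply: dvdz_mulr; exact: dvdz_gcdl].
by rewrite h dvdz1.
Qed.

Lemma numq_frac (m n : int) : 0 < n -> coprime `|m| `|n| -> numq (m%:~R / n%:~R) = m.
Proof. by move=> hn hc; rewrite coprimeq_num // gtr0_sg // mul1r. Qed.

Lemma denq_frac (m n : int) : 0 < n -> coprime `|m| `|n| -> denq (m%:~R / n%:~R) = n.
Proof. by move=> hn hc; rewrite coprimeq_den // gt_eqF // gtr0_norm. Qed.

Lemma convP (p q : nat) x : (0 < q)%N -> Pq p q x ->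
  is_farey (conv x) && sep (p%:Q / q%:Q) (conv x).
Proof.
case: x => [[m n] [m' n']] hq /and5P[h1 h2 h3 /eqP h4 /andP[h5 h6]].
rewrite /conv /=; case: eqP => hn'.
  subst n'.
  have hn1 : n = 1.
    have : m' * n = 1 by lia.
    have : 0 < m' by nia.
    nia.
  subst n.
  have hq' : (0:int) < q by lia.
  rewrite /is_farey /sep /= fracLt //.
  rewrite divr1 denq_int eqxx /= ler0z h3 /=.
  lia.
have hc1 := det_coprime h4.
have hc2 : coprime `|m'| `|n'| by apply: (@det_coprime m' n' (-m) (-n)); lia.
have hq' : (0:int) < q by lia.
have hn0 : (0:int) < n by lia.
have hn0' : (0:int) < n' by lia.
rewrite /is_farey /sep /= !numq_frac ?denq_frac //.
rewrite !fracLt //.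
apply/andP; split; [apply/andP; split; [lia | apply/eqP; lia] | apply/andP; split; lia].
Qed.

Lemma convE (p q : nat) l : (0 < p)%N -> (0 < q)%N -> is_farey l -> sep (p%:Q / q%:Q) l ->
  exists x, Pq p q x /\ conv x = l.
Proof.
case: l => a [b|] hp hq; rewrite /is_farey /sep /=.
  case/andP => hab /eqP habs /andP[har hrb].
  have hn := denq_gt0 a; have hn' := denq_gt0 b.
  have hq' : (0:int) < q by lia.
  move: hab har hrb; rewrite -[a]divq_num_den -[b]divq_num_den !fracLt // => hab har hrb.
  rewrite !divq_num_den in habs *.
  exists ((numq a, denq a), (numq b, denq b)); split.
    have hdet : numq b * denq a - numq a * denq b = 1 by lia.
    have hm' : 0 < numq b by nia.
    have hm : 0 <= numq a.
      case: (lerP 0 (numq a)) => // hlt.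
      have : numq b * denq a >= 1 by nia.
      have : - numq a * denq b >= 1 by nia.
      lia.
    by apply/and5P; split; try apply/eqP; try (apply/andP; split); lia.
  by rewrite /conv gt_eqF // !divq_num_den.
move=> /eqP hd /andP[h0 har].
have hq' : (0:int) < q by lia.
move: h0 har; rewrite -[a]divq_num_den hd fracLt // divr1 ler0z => h0 har.
exists (((numq a, 1%R), (1%R, 0%R)) : quad); split.
  by apply/and5P; split; try apply/eqP; try (apply/andP; split); lia.
by rewrite /conv eqxx divr1.
Qed.

Lemma conv_inj (p q : int) x y : Pq p q x -> Pq p q y -> conv x = conv y -> x = y.
Proof.
case: x => [[m n] [m' n']] /and5P[h1 h2 h3 /eqP h4 /andP[h5 h6]].
case: y => [[k l] [k' l']] /and5P[g1 g2 g3 /eqP g4 /andP[g5 g6]].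
rewrite /conv => -[e1 e2].
have c1 := det_coprime h4.
have c2 := det_coprime g4.
have em : m = k by rewrite -(numq_frac _ c1) // e1 numq_frac //; lia.
have en : n = l by rewrite -(denq_frac _ c1) // e1 denq_frac //; lia.
subst k l.
move: e2; case: eqP => hn'; case: eqP => hl' //.
  subst n' l' => _.
  have : m' * n = 1 by lia.
  have : k' * n = 1 by lia.
  have : 0 < n by lia.
  move=> *; have -> : m' = k' by nia.
  by [].
move=> [e2].
have c3 : coprime `|m'| `|n'| by apply: (@det_coprime m' n' (-m) (-n)); lia.
have c4 : coprime `|k'| `|l'| by apply: (@det_coprime k' l' (-m) (-n)); lia.
have em' : m' = k' by rewrite -(numq_frac _ c3) ?e2 ?numq_frac //; lia.
have en' : n' = l' by rewrite -(denq_frac _ c3) ?e2 ?denq_frac //; lia.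
by subst.
Qed.

Lemma farey_noint (a b : rat) (k : int) : is_farey (a, Some b) -> ~ (a < k%:~R < b).
Proof.
rewrite /is_farey /= => /andP[hab /eqP habs] /andP[h1 h2].
have hn := denq_gt0 a; have hn' := denq_gt0 b.
have h01 : (0:int) < 1 by [].
move: hab h1 h2; rewrite -[a]divq_num_den -[b]divq_num_den -[k%:~R]divr1 -[1]/(1%:~R).
rewrite !fracLt // => hab h1 h2.
have hdet : numq b * denq a - numq a * denq b = 1 by lia.
have e : numq b * denq a - numq a * denq b = (numq b - k * denq b) * denq a + (k * denq a - numq a) * denq b by ring.
have : (numq b - k * denq b) * denq a >= denq a by nia.
have : (k * denq a - numq a) * denq b >= denq b by nia.
lia.
Qed.


Lemma core_fin_l (R : rcfType) (rr c A B w1 w2 : R) : 0 < rr -> c * (1 + 2 * rr) = rr ^+ 2 - 1 -> A < B ->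
  0 < (A + 1/2) * (B + 1/2) + 3/4 ->
  0 < w2 -> (w1 - c) ^+ 2 + w2 ^+ 2 = (rr - c) ^+ 2 -> -(1/2) <= w1 -> w1 <= rr ->
  (w1 - A) * (w1 - B) + w2 ^+ 2 = 0 -> A < rr < B.
Proof.
move=> hr hc hab hf h2 hC hl hu hF.
set al := 2 * c - A - B.
set be := A * B + rr ^+ 2 - 2 * c * rr.
have E1 : al * w1 + be = 0.
  have : (w1 - A) * (w1 - B) + w2 ^+ 2 - ((w1 - c) ^+ 2 + w2 ^+ 2 - (rr - c) ^+ 2) = 0.
    by rewrite hF hC subrr subr0.
  move=> <-; rewrite /al /be; ring.
have Ef : al * (-(1/2)) + be = (A + 1/2) * (B + 1/2) + 3/4.
  rewrite /al /be.
  have -> : (2 * c - A - B) * - (1 / 2) + (A * B + rr ^+ 2 - 2 * c * rr) =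
     A * B + (A + B) / 2 + rr ^+ 2 - c * (1 + 2 * rr) by field.
  by rewrite hc; field.
have Er : al * rr + be = (rr - A) * (rr - B) by rewrite /al /be; ring.
have hne : w1 != rr.
  apply/eqP => e; subst w1.
  have : w2 ^+ 2 = 0 by move: hC; rewrite -[RHS]addr0 => /addrI.
  move/eqP; rewrite expf_eq0 /= => /eqP h0; lra.
have hlt : w1 < rr by rewrite lt_neqAle hne.
have h3 : al * (w1 + 1/2) < 0.
  have -> : al * (w1 + 1/2) = (al * w1 + be) - (al * (-(1/2)) + be) by ring.
  rewrite E1 Ef; lra.
have hal : al < 0.
  case: (ltP al 0) => // h; nra.
have h4 : (rr - A) * (rr - B) < 0.
  rewrite -Er.
  have -> : al * rr + be = al * (rr - w1) + (al * w1 + be) by ring.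
  rewrite E1 addr0; nra.
apply/andP; split.
  case: (ltP A rr) => // h; nra.
case: (ltP rr B) => // h; nra.
Qed.

Lemma core_fin_r (R : rcfType) (rr c A B : R) : 0 < rr -> c * (1 + 2 * rr) = rr ^+ 2 - 1 -> A < B ->
  0 < (A + 1/2) * (B + 1/2) + 3/4 -> A < rr -> rr < B ->
  exists w1 w2 : R, [/\ 0 < w2, (w1 - c) ^+ 2 + w2 ^+ 2 = (rr - c) ^+ 2, -(1/2) <= w1, w1 <= rr &
  (w1 - A) * (w1 - B) + w2 ^+ 2 = 0].
Proof.
move=> hr hc hab hf har hrb.
set al := 2 * c - A - B.
set be := A * B + rr ^+ 2 - 2 * c * rr.
have Ef : al * (-(1/2)) + be = (A + 1/2) * (B + 1/2) + 3/4.
  rewrite /al /be.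
  have -> : (2 * c - A - B) * - (1 / 2) + (A * B + rr ^+ 2 - 2 * c * rr) =
     A * B + (A + B) / 2 + rr ^+ 2 - c * (1 + 2 * rr) by field.
  by rewrite hc; field.
have Er : al * rr + be = (rr - A) * (rr - B) by rewrite /al /be; ring.
have hFr : (rr - A) * (rr - B) < 0 by nra.
have hal : al < 0.
  have : al * (rr + 1/2) < 0.
    have -> : al * (rr + 1/2) = (al * rr + be) - (al * (-(1/2)) + be) by ring.
    rewrite Er Ef; lra.
  case: (ltP al 0) => // h; nra.
set w1 := - be / al.
have Ew : al * w1 + be = 0 by rewrite /w1 mulrC divfK ?lt_eqF // addNr.
have hw1l : -(1/2) < w1.
  case: (ltP (-(1/2)) w1) => // h.
  have : al * (-(1/2)) + be <= al * w1 + be by nra.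
  rewrite Ew Ef; lra.
have hw1u : w1 < rr.
  case: (ltP w1 rr) => // h.
  have : al * w1 + be <= al * rr + be by nra.
  rewrite Ew Er; lra.
have Ec : (rr - c) ^+ 2 - (-(1/2) - c) ^+ 2 = 3/4.
  have -> : (rr - c) ^+ 2 - (-(1/2) - c) ^+ 2 = rr ^+ 2 - 1/4 - c * (1 + 2 * rr) by field.
  by rewrite hc; field.
set D := (rr - c) ^+ 2 - (w1 - c) ^+ 2.
have hD : 0 < D.
  have -> : D = (rr - w1) * (rr + w1 - 2 * c) by rewrite /D; ring.
  have h1 : 0 < rr - 1/2 - 2 * c.
    have : (rr + 1/2) * (rr - 1/2 - 2 * c) = 3/4 by rewrite -Ec; ring.
    move=> h; case: (ltP 0 (rr - 1/2 - 2 * c)) => // h'; nra.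
  apply: mulr_gt0; lra.
exists w1, (Num.sqrt D); split.
- by rewrite sqrtr_gt0.
- rewrite sqr_sqrtr ?ltW // /D; ring.
- lra.
- lra.
- rewrite sqr_sqrtr ?ltW // /D.
  rewrite -Ew /al /be; ring.
Qed.

Lemma core_vert_l (R : rcfType) (rr c A w2 : R) : 0 < rr -> c * (1 + 2 * rr) = rr ^+ 2 - 1 ->
  0 < w2 -> (A - c) ^+ 2 + w2 ^+ 2 = (rr - c) ^+ 2 -> -(1/2) <= A -> A <= rr -> A < rr.
Proof.
move=> hr hc h2 hC hl hu.
rewrite lt_neqAle hu andbT; apply/eqP => e; subst A.
have : w2 ^+ 2 = 0 by move: hC; rewrite -[RHS]addr0 => /addrI.
move/eqP; rewrite expf_eq0 /= => /eqP h0; lra.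
Qed.

Lemma core_vert_r (R : rcfType) (rr c A : R) : 0 < rr -> c * (1 + 2 * rr) = rr ^+ 2 - 1 ->
  0 <= A -> A < rr ->
  exists w2 : R, 0 < w2 /\ (A - c) ^+ 2 + w2 ^+ 2 = (rr - c) ^+ 2.
Proof.
move=> hr hc h0 hu.
have Ec : (rr - c) ^+ 2 - (-(1/2) - c) ^+ 2 = 3/4.
  have -> : (rr - c) ^+ 2 - (-(1/2) - c) ^+ 2 = rr ^+ 2 - 1/4 - c * (1 + 2 * rr) by field.
  by rewrite hc; field.
set D := (rr - c) ^+ 2 - (A - c) ^+ 2.
have hD : 0 < D.
  have -> : D = (rr - A) * (rr + A - 2 * c) by rewrite /D; ring.
  have h1 : 0 < rr - 1/2 - 2 * c.
    have : (rr + 1/2) * (rr - 1/2 - 2 * c) = 3/4 by rewrite -Ec; ring.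
    move=> h; case: (ltP 0 (rr - 1/2 - 2 * c)) => // h'; nra.
  apply: mulr_gt0; lra.
exists (Num.sqrt D); split; first by rewrite sqrtr_gt0.
rewrite sqr_sqrtr ?ltW // /D; ring.
Qed.



Lemma noint_R (R : realType) (a b : rat) (k : int) : is_farey (a, Some b) ->
  ~ ((ratr a : R) < (k%:~R : R) < (ratr b : R)).
Proof.
move=> hf /andP[h1 h2]; apply: (@farey_noint a b k hf).
rewrite -(ratr_int R k) !ltr_rat in h1 h2.
by rewrite h1 h2.
Qed.

Lemma fomega (R : realType) (a b : rat) : is_farey (a, Some b) ->
  0 < ((ratr a : R) + 1/2) * (ratr b + 1/2) + 3/4.
Proof.
move=> hf.
have hAB : (ratr a : R) < ratr b by rewrite ltr_rat; case/andP: hf.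
have n1 := @noint_R R a b (-1) hf.
have n0 := @noint_R R a b 0 hf.
rewrite rmorphN1 in n1; rewrite rmorph0 in n0.
set A := (ratr a : R) in hAB n1 n0 *; set B := (ratr b : R) in hAB n1 n0 *.
case: (lerP (-(1/2)) A) => h; first nra.
case: (lerP B (-(1/2))) => h'; first nra.
have hA : -1 <= A.
  case: (lerP (-1) A) => // h2; case: n1; apply/andP; split => //; lra.
have hB : B <= 0.
  case: (lerP B 0) => // h2; case: n0; apply/andP; split => //; lra.
nra.
Qed.

Lemma geo (R : realType) (r : rat) l : 0 < r -> is_farey l ->
  (exists w : R * R, on_ray (omega3 R) (Some r) w /\ on_farey l w) <-> sep r l.
Proof.
move=> hr hf.
have hrr : 0 < (ratr r : R) by rewrite ltr0q.
have s3 : (Num.sqrt 3 : R) ^+ 2 = 3 by rewrite sqr_sqrtr // ler0n.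
rewrite /on_ray /omega3 /=.
have hlt : (-(1/2) : R) < ratr r by lra.
rewrite (lt_eqF hlt) (min_l (ltW hlt)) (max_r (ltW hlt)).
set c := (_ / (2 * _)).
have hc : c * (1 + 2 * ratr r) = ratr r ^+ 2 - 1.
  rewrite /c expr_div_n s3.
  by field; rewrite lt_eqF //; lra.
clearbody c.
case: l hf => a [b|] hf /=.
  have hAB : (ratr a : R) < ratr b by rewrite ltr_rat; case/andP: hf.
  have hfo := @fomega R a b hf.
  split.
    case=> [[w1 w2]] /= [[h2 hC /andP[hl hu]] [_ hF]].
    have := core_fin_l hrr hc hAB hfo h2 hC hl hu hF.
    by rewrite /sep /= !ltr_rat.
  rewrite /sep /=; case/andP => h1 h2.
  have [w1 [w2 [g1 g2 g3 g4 g5]]] := core_fin_r hrr hc hAB hfo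
     (ltac:(by rewrite ltr_rat)) (ltac:(by rewrite ltr_rat)).
  exists (w1, w2) => /=; split => //; split => //.
  by rewrite g3 g4.
have ea : a = (numq a)%:~R.
  by rewrite numqE (eqP hf) mulr1.
split.
  case=> [[w1 w2]] /= [[h2 hC /andP[hl hu]] [_ e1]].
  move: e1 => /= e1; rewrite {}e1 in hC hl hu.
  have := core_vert_l hrr hc h2 hC hl hu.
  rewrite /sep /= ltr_rat => ->; rewrite andbT.
  rewrite -numq_ge0.
  case: (lerP 0 (numq a)) => // hn.
  have : numq a <= -1 by lia.
  rewrite -(ler_int R) rmorphN1 => h.
  move: hl; rewrite {1}ea ratr_int; lra.
rewrite /sep /=; case/andP => h0 h1.
have hA0 : 0 <= (ratr a : R) by rewrite ler0q.
have hA1 : (ratr a : R) < ratr r by rewrite ltr_rat.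
have [w2 [g1 g2]] := core_vert_r hrr hc hA0 hA1.
exists (ratr a, w2) => /=; split => //; split => //.
by rewrite (ltW hA1) andbT; lra.
Qed.

Unset Implicit Arguments.
Theorem lemma12 (R : realType) (p q : nat) :
  (0 < p)%N -> (0 < q)%N -> coprime p q ->
  dc_is (omega3 R) (Some ((p%:Q) / (q%:Q))) (Euclid_complexity p q).
Proof.
move=> hp hq hco.
have hr : 0 < (p%:Q) / (q%:Q) by apply: divr_gt0; rewrite ltr0z; lia.
have hmem := @mem_Lq (p + q)%N p q hp hq hco (leqnn _).
exists (map conv (Lq (p + q) p q)); split.
- have hu := uniq_Lq hp hq hco (leqnn _).
  rewrite map_inj_in_uniq ?hu //.
  move=> x y; rewrite !hmem => hx hy; exact: (conv_inj hx hy).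
- move=> l; split.
    case/mapP => x; rewrite hmem => hx ->.
    have /andP[h1 h2] := convP hq hx.
    by split => //; apply/(geo R hr h1).
  case=> h1 /(geo R hr h1) h2.
  have [x [hx <-]] := convE hp hq h1 h2.
  by apply: map_f; rewrite hmem.
- by rewrite size_map size_Lq.
Qed.
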